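(* Let $\mathfrak{B}=\bigcup_{\alpha<\xi}B_\alpha$ be a tightly $\sigma$-filtered Boolean algebra with its fixed chain $(B_\alpha)_{\alpha<\xi}$ and countable subalgebras $R_\alpha,S_\alpha$. Let $\Delta,\Gamma_1,\ldots,\Gamma_n$ be saturated subsets of $\xi$ such that $\Gamma_i\cap\Gamma_j=\Delta$ for all $i\neq j$. Let $P(x_1,\ldots,x_n)$ be a Boolean polynomial and let $a_i\in E(\Gamma_i)$ ($i=1,\ldots,n$) satisfy $P(a_1,\ldots,a_n)=0$. Then there exist $r_i^-,r_i^+\in E(\Delta)$ with $r_i^-\le a_i\le r_i^+$ for each $i$ and $P(r_1^{\varepsilon_1},\ldots,r_n^{\varepsilon_n})=0$ for every choice of signs $\varepsilon_i\in\{+,-\}$.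
   Context: For a subset $X$ of a Boolean algebra, $\langle X\rangle$ is the subalgebra generated by $X$. Two subalgebras $A,S$ commute if whenever $a\in A$, $s\in S$, $a\wedge s=0$, there exist $b_1,b_2\in A\cap S$ with $a\le b_1$, $s\le b_2$, $b_1\wedge b_2=0$. A square of inclusions $R\subseteq A\subseteq B$, $R\subseteq S\subseteq B$ is a push-out diagram if $\langle A\cup S\rangle=B$, $A\cap S=R$, and $A,S$ commute. $\mathfrak{B}$ is tightly $\sigma$-filtered via an increasing chain of subalgebras $(B_\alpha)_{\alpha<\xi}$ ($\xi$ an ordinal) with $B_0=\{0,1\}$, $\mathfrak{B}=\bigcup_{\alpha<\xi}B_\alpha$, $B_\alpha=\bigcup_{\beta<\alpha}B_\beta$ for limit $\alpha$, and for each $\alpha<\xi$ countable subalgebras $R_\alpha,S_\alpha\subseteq\mathfrak{B}$ such that $R_\alpha\subseteq B_\alpha\subseteq B_{\alpha+1}$, $R_\alpha\subseteq S_\alpha\subseteq B_{\alpha+1}$ is a push-out diagram. For $\Gamma\subseteq\xi$, $E(\Gamma)=\langle\bigcup_{i\in\Gamma}S_i\rangle$. A set $\Gamma\subseteq\xi$ is saturated if $R_\gamma\subseteq E(\Gamma\cap\gamma)$ for every $\gamma\in\Gamma$. *)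

(* Defs.v *)
From mathcomp Require Import all_boot all_order.
From mathcomp Require Import boolp classical_sets cardinality.
Set Implicit Arguments. Unset Strict Implicit. Unset Printing Implicit Defensive.
Import Order.TTheory.

Section BoolAlg.
Context {d : Order.disp_t} (T : ctbDistrLatticeType d).

Definition subalg (A : set T) : Prop :=
  [/\ A Order.bottom, A Order.top,
      (forall x y, A x -> A y -> A (Order.meet x y)),
      (forall x y, A x -> A y -> A (Order.join x y)) &
      (forall x, A x -> A (Order.compl x))].

Definition gen (X : set T) : set T :=
  fun x => forall A : set T, subalg A -> (forall y, X y -> A y) -> A x.

Definition commute_sub (A S : set T) : Prop :=
  forall a s, A a -> S s -> Order.meet a s = Order.bottom ->
    exists b1 b2, (A b1 /\ S b1) /\ (A b2 /\ S b2) /\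
      (a <= b1)%O /\ (s <= b2)%O /\ Order.meet b1 b2 = Order.bottom.

Definition pushout (R A S B : set T) : Prop :=
  subalg R /\ subalg A /\ subalg S /\ subalg B /\
  (forall x, R x -> A x) /\ (forall x, A x -> B x) /\
  (forall x, R x -> S x) /\ (forall x, S x -> B x) /\
  gen (fun x => A x \/ S x) = B /\
  (fun x => A x /\ S x) = R /\
  commute_sub A S.

Inductive bpoly (n : nat) : Type :=
  | BVar of 'I_n
  | BZero | BOne
  | BMeet of bpoly n & bpoly n
  | BJoin of bpoly n & bpoly n
  | BCompl of bpoly n.

Fixpoint beval (n : nat) (P : bpoly n) (v : 'I_n -> T) : T :=
  match P with
  | BVar i => v i
  | BZero => Order.bottom
  | BOne => Order.top
  | BMeet p q => Order.meet (beval p v) (beval q v)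
  | BJoin p q => Order.join (beval p v) (beval q v)
  | BCompl p => Order.compl (beval p v)
  end.

Section Filtration.
(* The ordinal xi is represented by a well-ordered type I (its elements are
   the ordinals alpha < xi). *)
Context {dI : Order.disp_t} (I : orderType dI).

Definition is_least (a : I) : Prop := forall b : I, ~ (b < a)%O.

Definition is_limit (a : I) : Prop :=
  (exists b : I, (b < a)%O) /\
  forall b : I, (b < a)%O -> exists c : I, (b < c)%O /\ (c < a)%O.

(* B_{alpha+1}: the stage at the successor of alpha if alpha+1 < xi,
   and the whole algebra (= B_xi) if alpha+1 = xi. *)
Definition Bsucc (B : I -> set T) (a : I) : set T :=
  fun x => (exists b : I, (a < b)%O /\ (forall c : I, (a < c)%O -> (b <= c)%O) /\ B b x)
        \/ (forall b : I, ~ (a < b)%O).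

Definition tightly_sigma_filtered (B R S : I -> set T) : Prop :=
  well_founded (fun a b : I => (a < b)%O) /\
  (forall a, subalg (B a)) /\
  (forall a b : I, (a <= b)%O -> forall x, B a x -> B b x) /\
  (forall a, is_least a -> B a = (fun x => x = Order.bottom \/ x = Order.top)) /\
  (forall x : T, exists a, B a x) /\
  (forall a, is_limit a -> B a = (fun x => exists b, (b < a)%O /\ B b x)) /\
  (forall a, countable (R a) /\ countable (S a) /\
             pushout (R a) (B a) (S a) (Bsucc B a)).

Definition E (S : I -> set T) (G : set I) : set T :=
  gen (fun x => exists i, G i /\ S i x).

Definition saturated (R S : I -> set T) (G : set I) : Prop :=
  forall g, G g -> forall x, R g x -> E S (fun i => G i /\ (i < g)%O) x.

End Filtration.
End BoolAlg.

(* Main.v *)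
From HB Require Import structures.
Require Import Defs.
From mathcomp Require Import all_boot all_order.
From mathcomp Require Import boolp classical_sets cardinality.
Set Implicit Arguments. Unset Strict Implicit. Unset Printing Implicit Defensive.
Import Order.Theory.
Local Open Scope order_scope.

Section Gen.
Context {d : Order.disp_t} (T : ctbDistrLatticeType d).
Implicit Types (X Y A : set T).

Lemma sa0 A : subalg A -> A \bot. Proof. by case. Qed.
Lemma sa1 A : subalg A -> A \top. Proof. by case. Qed.
Lemma saI A x y : subalg A -> A x -> A y -> A (x `&` y).
Proof. by case=> _ _ h _ _; apply: h. Qed.
Lemma saU A x y : subalg A -> A x -> A y -> A (x `|` y).
Proof. by case=> _ _ _ h _; apply: h. Qed.
Lemma saC A x : subalg A -> A x -> A (~` x).
Proof. by case=> _ _ _ _ h; apply: h. Qed.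

Lemma sa_meets A (J : Type) (r : seq J) (P : pred J) (F : J -> T) :
  subalg A -> (forall i, P i -> A (F i)) -> A (\meet_(i <- r | P i) F i).
Proof. move=> hA hF; apply: (big_ind A); [exact: sa1 | by move=> *; apply: saI | done]. Qed.
Lemma sa_joins A (J : Type) (r : seq J) (P : pred J) (F : J -> T) :
  subalg A -> (forall i, P i -> A (F i)) -> A (\join_(i <- r | P i) F i).
Proof. move=> hA hF; apply: (big_ind A); [exact: sa0 | by move=> *; apply: saU | done]. Qed.

Lemma gen_subalg X : subalg (gen X).
Proof.
split.
- by move=> A hA _; apply: sa0.
- by move=> A hA _; apply: sa1.
- by move=> x y hx hy A hA hX; apply: saI => //; [apply: hx | apply: hy].
- by move=> x y hx hy A hA hX; apply: saU => //; [apply: hx | apply: hy].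
- by move=> x hx A hA hX; apply: saC => //; apply: hx.
Qed.
Lemma gen_incl X x : X x -> gen X x.
Proof. by move=> hx A _ h; exact: h. Qed.
Lemma gen_min X A : subalg A -> (forall y, X y -> A y) -> forall x, gen X x -> A x.
Proof. by move=> hA hX x hx; exact: hx. Qed.
Lemma gen_mono X Y : (forall x, X x -> Y x) -> forall x, gen X x -> gen Y x.
Proof.
move=> h x hx; apply: gen_min hx; first exact: gen_subalg.
by move=> y /h; exact: gen_incl.
Qed.

Lemma meet_mono n (F G : 'I_n -> T) : (forall i, F i <= G i) ->
  \meet_(i < n) F i <= \meet_(i < n) G i.
Proof. by move=> h; apply: meets_ge => j _; apply: meets_max (h j). Qed.

Lemma meet_bot_mono n (F G : 'I_n -> T) : (forall i, F i <= G i) ->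
  \meet_(i < n) G i = \bot -> \meet_(i < n) F i = \bot.
Proof. by move=> h hG; apply/eqP; rewrite -lex0 -hG; apply: meet_mono. Qed.

Lemma split_c (c e : T) : e <= (c `&` e) `|` ~` c.
Proof. by rewrite joinC joinIr joinCx meet1x lexUr. Qed.

Lemma cmeet (c v : T) : c `&` (v `|` ~` c) <= v.
Proof. by rewrite meetUr meetxC joinx0 leIr. Qed.


Definition setv n (x : 'I_n -> T) (i : 'I_n) (w : T) : 'I_n -> T :=
  fun j => if j == i then w else x j.

Inductive JC (Tm : T -> Prop) : T -> Prop :=
| JC0 : JC Tm \bot
| JCt t : Tm t -> JC Tm t
| JCj y z : JC Tm y -> JC Tm z -> JC Tm (y `|` z).

Lemma JC_sa (Tm : T -> Prop) : Tm \top -> (forall y z, Tm y -> Tm z -> Tm (y `&` z)) ->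
  (forall y, Tm y -> JC Tm (~` y)) -> subalg (JC Tm).
Proof.
move=> h1 hI hC.
have hIt : forall t w, Tm t -> JC Tm w -> JC Tm (t `&` w).
  move=> t w ht; elim=> [|t' ht'|a b _ iha _ ihb].
  - by rewrite meetx0; exact: JC0.
  - by apply: JCt; apply: hI.
  - by rewrite meetUr; apply: JCj.
have hII : forall y w, JC Tm y -> JC Tm w -> JC Tm (y `&` w).
  move=> y w; elim=> [|t ht|a b _ iha _ ihb] hw.
  - by rewrite meet0x; exact: JC0.
  - by apply: hIt.
  - by rewrite meetUl; apply: JCj; [apply: iha | apply: ihb].
split.
- exact: JC0.
- exact: JCt.
- by move=> *; apply: hII.
- by move=> *; apply: JCj.
- move=> x; elim=> [|t ht|a b _ iha _ ihb].
  + by rewrite compl0; apply: JCt.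
  + exact: hC.
  + by rewrite complU; apply: hII.
Qed.

Lemma coords n (Tm : 'I_n -> T -> Prop) (Q : ('I_n -> T) -> Prop) :
  (forall x i, Q (setv x i \bot)) ->
  (forall x i y z, Q (setv x i y) -> Q (setv x i z) -> Q (setv x i (y `|` z))) ->
  (forall x, (forall i, Tm i (x i)) -> Q x) ->
  forall x, (forall i, JC (Tm i) (x i)) -> Q x.
Proof.
move=> hb hj ht.
suff H : forall k x, (forall i : 'I_n, (i < k)%N -> JC (Tm i) (x i)) ->
    (forall i : 'I_n, (k <= i)%N -> Tm i (x i)) -> Q x.
  by move=> x hx; apply: (H n) => // i; rewrite leqNgt ltn_ord.
elim=> [|k IH] x h1 h2; first by apply: ht => i; apply: h2.
case: (ltnP k n) => hk; last first.
  apply: IH => i hi; first by apply: h1; apply: ltnW.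
  by move: (ltn_ord i); rewrite ltnNge (leq_trans hk hi).
pose i0 := Ordinal hk.
have e : x = setv x i0 (x i0) by apply: funext => j; rewrite /setv; case: eqP => // ->.
rewrite e; have : JC (Tm i0) (x i0) by apply: h1 => /=.
elim => [|t htt|a b _ iha _ ihb]; [exact: hb | | exact: hj].
apply: IH => i hi.
  have ne : i != i0 by apply/eqP => ii; move: hi; rewrite ii /= ltnn.
  rewrite /setv (negbTE ne); apply: h1; exact: ltnW.
rewrite /setv; case: eqP => [-> //|ne].
apply: h2; rewrite ltn_neqAle hi andbT; apply/eqP => ki; apply: ne; apply: val_inj => /=.
by rewrite ki.
Qed.

Section Filt.
Context {dI : Order.disp_t} (I : orderType dI) (B R S : I -> set T).
Hypothesis Hfilt : tightly_sigma_filtered B R S.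

Lemma po m : pushout (R m) (B m) (S m) (Bsucc B m).
Proof. by case: Hfilt => _ [_ [_ [_ [_ [_ h]]]]]; case: (h m) => _ []. Qed.

Lemma B_sa m : subalg (B m).
Proof. by case: Hfilt => _ [h _]. Qed.
Lemma S_sa m : subalg (S m).
Proof. by case: (po m) => _ [_ [h _]]. Qed.
Lemma R_sub_B m x : R m x -> B m x.
Proof. by case: (po m) => _ [_ [_ [_ [h _]]]]; apply: h. Qed.
Lemma BS_R m x : B m x -> S m x -> R m x.
Proof.
case: (po m) => _ [_ [_ [_ [_ [_ [_ [_ [_ [h _]]]]]]]]] hB hS.
by rewrite -h; split.
Qed.
Lemma comm m : commute_sub (B m) (S m).
Proof. by case: (po m) => _ [_ [_ [_ [_ [_ [_ [_ [_ [_ h]]]]]]]]]. Qed.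

Lemma S_sub_B j m x : (j < m)%O -> S j x -> B m x.
Proof.
move=> jm hS.
have hSB : Bsucc B j x by case: (po j) => _ [_ [_ [_ [_ [_ [_ [h _]]]]]]]; apply: h.
case: hSB => [[b [jb [hmin hb]]] | hmax]; last by case: (hmax m).
case: Hfilt => _ [_ [hmono _]]; apply: (hmono b) => //; exact: hmin.
Qed.

Lemma E_sub_B (G : set I) m x : (forall k, G k -> (k < m)%O) -> E S G x -> B m x.
Proof.
move=> hG; apply: gen_min; first exact: B_sa.
by move=> y [j [Gj Sj]]; apply: S_sub_B Sj; apply: hG.
Qed.

Lemma E_sa (G : set I) : subalg (E S G).
Proof. exact: gen_subalg. Qed.

Lemma E_mono (G G' : set I) x : (forall k, G k -> G' k) -> E S G x -> E S G' x.
Proof. by move=> h; apply: gen_mono => y [j [Gj Sj]]; exists j; split => //; apply: h. Qed.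

Lemma E_gen (G : set I) j x : G j -> S j x -> E S G x.
Proof. by move=> Gj Sj; apply: gen_incl; exists j. Qed.

Lemma sat_restr (G Z : set I) : saturated R S G ->
  (forall a b, Z a -> (b < a)%O -> Z b) -> saturated R S (fun k => G k /\ Z k).
Proof.
move=> hs hZ g [Gg Zg] x Rx; apply: E_mono (hs g Gg x Rx).
by move=> k [Gk kg]; split => //; split => //; apply: hZ kg.
Qed.

Definition E0 := E S (fun _ : I => False).

Lemma E0_sub (G : set I) x : E0 x -> E S G x.
Proof. by apply: E_mono. Qed.

Definition Ule (G : set I) (M : I) := E S (fun k => G k /\ (k <= M)%O).

Lemma Ule_mono G M M' x : (M <= M')%O -> Ule G M x -> Ule G M' x.
Proof. by move=> h; apply: E_mono => k [Gk kM]; split => //; apply: le_trans h. Qed.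

Lemma fin (G : set I) y : E S G y -> E0 y \/ exists M, G M /\ Ule G M y.
Proof.
move=> hy; apply: (@gen_min _ (fun y => E0 y \/ exists M, G M /\ Ule G M y) _ _ y hy).
  have two : forall u v, (E0 u \/ exists M, G M /\ Ule G M u) ->
     (E0 v \/ exists M, G M /\ Ule G M v) ->
     (E0 u /\ E0 v) \/ exists M, G M /\ Ule G M u /\ Ule G M v.
    move=> u v [hu | [M [GM hu]]] [hv | [M' [GM' hv]]].
    - by left.
    - by right; exists M'; split => //; split => //; apply: E0_sub.
    - by right; exists M; split => //; split => //; apply: E0_sub.
    - right; case/orP: (le_total M M') => hMM.
        by exists M'; split => //; split => //; apply: Ule_mono hu.
      by exists M; split => //; split => //; apply: Ule_mono hv.
  split.
  - by left; apply: (sa0 (E_sa _)).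
  - by left; apply: (sa1 (E_sa _)).
  - move=> u v hu hv; case: (two u v hu hv) => [[a b] | [M [GM [a b]]]].
      by left; apply: (saI (E_sa _) a b).
    by right; exists M; split => //; apply: (saI (E_sa _) a b).
  - move=> u v hu hv; case: (two u v hu hv) => [[a b] | [M [GM [a b]]]].
      by left; apply: (saU (E_sa _) a b).
    by right; exists M; split => //; apply: (saU (E_sa _) a b).
  - move=> u [hu | [M [GM hu]]].
      by left; apply: (saC (E_sa _) hu).
    by right; exists M; split => //; apply: (saC (E_sa _) hu).
move=> z [j [Gj Sj]]; right; exists j; split => //.
by apply: (E_gen (j := j)).
Qed.

Lemma fin_tuple n (G : 'I_n -> set I) (x : 'I_n -> T) :
  (forall i, E S (G i) (x i)) ->
  (forall i, E0 (x i)) \/ exists M, (exists i, G i M) /\ forall i, Ule (G i) M (x i).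
Proof.
move=> hx.
suff : forall s : seq 'I_n, (forall i, i \in s -> E0 (x i)) \/
   exists M, (exists i, G i M) /\ forall i, i \in s -> Ule (G i) M (x i).
  case/(_ (enum 'I_n)) => [h | [M [hM h]]].
    by left => i; apply: h; rewrite mem_enum.
  by right; exists M; split => // i; apply: h; rewrite mem_enum.
elim=> [|i s IH]; first by left.
case: (fin (hx i)) => [h0 | [M [GM hM]]]; case: IH => [hs | [M' [GM' hs]]].
- by left => j; rewrite inE => /orP [/eqP -> | /hs].
- right; exists M'; split => // j; rewrite inE => /orP [/eqP -> | /hs //].
  by apply: E0_sub.
- right; exists M; split; first by exists i.
  move=> j; rewrite inE => /orP [/eqP -> // | /hs]; exact: E0_sub.
- right; case/orP: (le_total M M') => hMM.
    exists M'; split => // j; rewrite inE => /orP [/eqP -> | /hs //].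
    exact: Ule_mono hM.
  exists M; split; first by exists i.
  move=> j; rewrite inE => /orP [/eqP -> // | /hs]; exact: Ule_mono.
Qed.

Definition Hyps n (Dl : set I) (G : 'I_n -> set I) :=
  [/\ saturated R S Dl, (forall i, saturated R S (G i)), (forall i k, Dl k -> G i k) &
      (forall i j, i <> j -> forall k, G i k -> G j k -> Dl k)].
Definition Concl n (Dl : set I) (x : 'I_n -> T) := exists u : 'I_n -> T,
  (forall i, E S Dl (u i) /\ x i <= u i) /\ \meet_(i < n) u i = \bot.
Definition Dm (m : I) := forall n Dl (G : 'I_n -> set I) (x : 'I_n -> T), Hyps Dl G ->
  (forall i k, G i k -> (k <= m)%O) -> (forall i, E S (G i) (x i)) ->
  \meet_(i < n) x i = \bot -> Concl Dl x.

Lemma hyps_restr n Dl (G : 'I_n -> set I) (Z : set I) : Hyps Dl G ->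
  (forall a b, Z a -> (b < a)%O -> Z b) ->
  Hyps (fun k => Dl k /\ Z k) (fun i k => G i k /\ Z k).
Proof.
case=> h1 h2 h3 h4 hZ; split.
- exact: sat_restr.
- move=> i; exact: sat_restr.
- by move=> i k [Dk Zk]; split => //; apply: h3.
- by move=> i j ij k [a Zk] [b _]; split => //; apply: (h4 i j ij).
Qed.

Lemma Concl_mono n Dl Dl' (x : 'I_n -> T) : (forall k, Dl k -> Dl' k) ->
  Concl Dl x -> Concl Dl' x.
Proof.
move=> h [u [hu hm]]; exists u; split => // i; case: (hu i) => a b; split => //.
exact: E_mono a.
Qed.

Lemma via_fin n Dl (G : 'I_n -> set I) (x : 'I_n -> T) :
  (forall M, (exists i, G i M) -> Dm M) -> Hyps Dl G ->
  (forall i, E S (G i) (x i)) -> \meet_(i < n) x i = \bot -> Concl Dl x.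
Proof.
move=> hD hH hx hm; case: (fin_tuple hx) => [h0 | [M [hM hU]]].
  by exists x; split => // i; split => //; apply: E0_sub.
apply: (Concl_mono (Dl := fun k => Dl k /\ (k <= M)%O)); first by move=> k [].
apply: (hD M hM n _ (fun i k => G i k /\ (k <= M)%O)) => //.
- apply: hyps_restr => // a b h ba; exact: le_trans (ltW ba) h.
- by move=> i k [].
Qed.

Definition Qp n Dl (x : 'I_n -> T) := \meet_(i < n) x i = \bot -> Concl Dl x.

Lemma Q_bot n Dl (x : 'I_n -> T) i : Qp Dl (setv x i \bot).
Proof.
move=> _; exists (setv (fun _ => \top) i \bot); split.
  move=> j; rewrite /setv; case: (j == i); split;
    try exact: (sa0 (E_sa _)); try exact: (sa1 (E_sa _)); by rewrite ?lex1.
apply/eqP; rewrite -lex0; apply: (meets_max (j := i)) => //.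
by rewrite /setv eqxx.
Qed.

Lemma Q_join n Dl (x : 'I_n -> T) i y z :
  Qp Dl (setv x i y) -> Qp Dl (setv x i z) -> Qp Dl (setv x i (y `|` z)).
Proof.
move=> hy hz hm.
have [u1 [h1 m1]] : Concl Dl (setv x i y).
  apply: hy; apply: meet_bot_mono hm => j; rewrite /setv; case: (j == i) => //.
  exact: leUl.
have [u2 [h2 m2]] : Concl Dl (setv x i z).
  apply: hz; apply: meet_bot_mono hm => j; rewrite /setv; case: (j == i) => //.
  exact: leUr.
exists (fun j => if j == i then u1 j `|` u2 j else u1 j `&` u2 j); split.
  move=> j; case: (h1 j) (h2 j) => a b [c e]; rewrite /setv in b e *.
  case: (eqVneq j i) => [ji|ji] in b e *; split.
  - exact: (saU (E_sa _) a c).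
  - exact: leU2.
  - exact: (saI (E_sa _) a c).
  - by rewrite lexI b e.
apply/eqP; rewrite -lex0.
set U := \meet_(j < n) _.
have hUi : U <= u1 i `|` u2 i by apply: (meets_max (j:=i)) => //; rewrite eqxx.
rewrite -(meet_idPl hUi) meetUr leUx; apply/andP; split.
  rewrite -m1; apply: meets_ge => j _; case: (eqVneq j i) => [->|ji]; first exact: leIr.
  apply: leIxl; apply: (meets_max (j:=j)) => //; rewrite (negbTE ji); exact: leIl.
rewrite -m2; apply: meets_ge => j _; case: (eqVneq j i) => [->|ji]; first exact: leIr.
apply: leIxl; apply: (meets_max (j:=j)) => //; rewrite (negbTE ji); exact: leIr.
Qed.

Lemma step m : (forall M, (M < m)%O -> Dm M) -> Dm m.
Proof.
move=> IH n Dl G x hH hb hx hm.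
have hH' := hyps_restr (Z := fun k => (k < m)%O) hH (fun a b h ba => lt_trans ba h).
case: hH => hsD hsG hDG hGG.
pose Gm i := fun k => G i k /\ (k < m)%O.
pose Dlm := fun k => Dl k /\ (k < m)%O.
have IHm : forall y : 'I_n -> T, (forall i, E S (Gm i) (y i)) ->
    \meet_(i < n) y i = \bot -> Concl Dl y.
  move=> y hy hmy; apply: (Concl_mono (Dl := Dlm)); first by move=> k [].
  apply: (via_fin _ hH' hy hmy) => M [i [_ Mm]]; exact: IH.
have GmB : forall i k, Gm i k -> (k < m)%O by move=> i k [].
case: (pselect (exists i0, G i0 m)) => [[i0 hi0] | hno]; last first.
  apply: IHm => // i; apply: E_mono (hx i) => k Gk; split => //.
  rewrite lt_neqAle (hb i k Gk) andbT; apply/eqP => km; apply: hno; exists i; by rewrite -km.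
pose Terms i := fun t => exists s e, (S m s /\ (~ G i m -> s = \bot \/ s = \top)) /\
   E S (Gm i) e /\ t = s `&` e.
have hJC : forall i, JC (Terms i) (x i).
  move=> i; apply: (@gen_min _ (JC (Terms i)) _ _ _ (hx i)).
    apply: JC_sa.
    - exists \top, \top; split; first by split; [exact: (sa1 (S_sa m)) | by move=> _; right].
      by split; [exact: (sa1 (E_sa _)) | rewrite meetxx].
    - move=> y z [s1 [e1 [[S1 h1] [E1 ->]]]] [s2 [e2 [[S2 h2] [E2 ->]]]].
      exists (s1 `&` s2), (e1 `&` e2); split; last first.
        by split; [exact: (saI (E_sa _) E1 E2) | rewrite meetACA].
      split; first exact: (saI (S_sa m) S1 S2).
      move=> nG; case: (h1 nG) => ->; first by left; rewrite meet0x.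
      by rewrite meet1x; apply: h2.
    - move=> y [s1 [e1 [[S1 h1] [E1 ->]]]].
      rewrite complI; apply: JCj; apply: JCt.
        exists (~` s1), \top; split; last by split; [exact: (sa1 (E_sa _)) | rewrite meetx1].
        split; first exact: (saC (S_sa m) S1).
        move=> nG; case: (h1 nG) => ->; [right; exact: compl0 | left; exact: compl1].
      exists \top, (~` e1); split; first by split; [exact: (sa1 (S_sa m)) | by move=> _; right].
      by split; [exact: (saC (E_sa _) E1) | rewrite meet1x].
  move=> y [j [Gj Sj]]; apply: JCt.
  move: (hb i j Gj); rewrite le_eqVlt => /orP [/eqP jm | jm].
    exists y, \top; split; first by split; [rewrite -jm | move=> nG; case: nG; rewrite -jm].
    by split; [exact: (sa1 (E_sa _)) | rewrite meetx1].
  exists \top, y; split; first by split; [exact: (sa1 (S_sa m)) | by move=> _; right].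
  split; last by rewrite meet1x.
  by apply: (E_gen (j := j)).
suff hQ : Qp Dl x by apply: hQ.
have hb0 : forall (x : 'I_n -> T) i, Qp Dl (setv x i \bot) by move=> x0 i; exact: Q_bot.
have hj0 : forall (x : 'I_n -> T) i y z, Qp Dl (setv x i y) -> Qp Dl (setv x i z) ->
  Qp Dl (setv x i (y `|` z)) by move=> x0 i y z; exact: Q_join.
apply: (coords hb0 hj0 _ hJC).
move=> z hz hmz.
have : forall i, exists p : T * T, (S m p.1 /\ (~ G i m -> p.1 = \bot \/ p.1 = \top)) /\
    E S (Gm i) p.2 /\ z i = p.1 `&` p.2.
  by move=> i; case: (hz i) => s [e h]; exists (s, e).
case/choice => p hp.
pose s := fun i => (p i).1.
pose e := fun i => (p i).2.
have hS : forall i, S m (s i) by move=> i; case: (hp i) => [[]].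
have hS01 : forall i, ~ G i m -> s i = \bot \/ s i = \top by move=> i; case: (hp i) => [[]].
have hE : forall i, E S (Gm i) (e i) by move=> i; case: (hp i) => _ [].
have hz' : forall i, z i = s i `&` e i by move=> i; case: (hp i) => _ [].
have hEB : forall i, B m (e i) by move=> i; apply: (E_sub_B (GmB i)); apply: hE.
case: (pselect (Dl m)) => [Dlm_ | nDl].
-
  pose sA := \meet_(i < n) s i.
  pose eA := \meet_(i < n) e i.
  have hsA : S m sA by apply: sa_meets => //; exact: S_sa.
  have heA : B m eA by apply: sa_meets => //; exact: B_sa.
  have hse : eA `&` sA = \bot.
    apply/eqP; rewrite -lex0 -hmz; apply: meets_ge => j _; rewrite hz' meetC.
    by apply: leI2; apply: (meets_inf (j:=j)).
  case: (comm heA hsA hse) => b1 [b2 [[B1 S1] [[B2 S2] [le1 [le2 h12]]]]].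
  have Rc : R m b2 := BS_R B2 S2.
  have Ec : E S Dlm b2 := hsD m Dlm_ b2 Rc.
  pose y := setv e i0 (b2 `&` e i0).
  have hy : forall i, E S (Gm i) (y i).
    move=> i; rewrite /y /setv; case: eqP => [->|_]; last exact: hE.
    apply: (saI (E_sa _)) (hE i0); apply: E_mono Ec => k [Dk km]; split => //.
    exact: hDG.
  have hmy : \meet_(i < n) y i = \bot.
    apply/eqP; rewrite -lex0 -h12 lexI; apply/andP; split.
      apply: le_trans le1; apply: meets_ge => j _; apply: (meets_max (j:=j)) => //.
      by rewrite /y /setv; case: eqP => [->|_]; [exact: leIr | exact: lexx].
    by apply: (meets_max (j:=i0)) => //; rewrite /y /setv eqxx leIl.
  case: (IHm y hy hmy) => v [hv hvm].
  pose w := setv v i0 (v i0 `|` ~` b2).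
  exists (fun i => s i `&` w i); split.
    move=> i; split.
      apply: (saI (E_sa _)); first by apply: (E_gen (j := m)).
      rewrite /w /setv; case: eqP => _; last by case: (hv i).
      apply: (saU (E_sa _)); first by case: (hv i0).
      by apply: (saC (E_sa _)); apply: E_mono Ec => k [].
    rewrite hz'; apply: leI2 => //; rewrite /w /setv; case: eqP => [->|ne].
      apply: le_trans (split_c b2 (e i0)) _; apply: leU2 => //.
      by case: (hv i0) => _; rewrite /y /setv eqxx.
    by case: (hv i) => _; rewrite /y /setv; case: eqP.
  apply/eqP; rewrite -lex0 -hvm; apply: meets_ge => j _.
  set U := \meet_(i < n) _.
  have hUb : U <= b2.
    apply: le_trans le2; apply: meets_ge => k _; apply: (meets_max (j := k)) => //.
    exact: leIl.
  case: (eqVneq j i0) => [->|ne].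
    apply: le_trans (cmeet b2 (v i0)); rewrite lexI hUb /=.
    by apply: (meets_max (j := i0)) => //; rewrite /w /setv eqxx leIr.
  by apply: (meets_max (j := j)) => //; rewrite /w /setv (negbTE ne) leIr.
-
  have nG : forall j, j != i0 -> ~ G j m.
    move=> j ne Gj; apply: nDl; apply: (hGG i0 j) hi0 Gj.
    by move=> ij; move: ne; rewrite ij eqxx.
  have h01B : forall j, j != i0 -> forall A, subalg A -> A (s j).
    by move=> j ne A hA; case: (hS01 j (nG j ne)) => ->; [exact: sa0 | exact: sa1].
  pose zz := setv z i0 (e i0).
  have heA : B m (\meet_(i < n) zz i).
    apply: sa_meets; first exact: B_sa.
    move=> j _; rewrite /zz /setv; case: eqP => [_|/eqP ne]; first exact: hEB.
    by rewrite hz'; apply: (saI (B_sa m)); [apply: h01B => //; exact: B_sa | exact: hEB].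
  have hse : (\meet_(i < n) zz i) `&` s i0 = \bot.
    apply/eqP; rewrite -lex0 -hmz; apply: meets_ge => j _.
    case: (eqVneq j i0) => [->|ne].
      rewrite hz' meetC; apply: leI2 => //; apply: (meets_max (j := i0)) => //.
      by rewrite /zz /setv eqxx.
    apply: leIxl; apply: (meets_max (j := j)) => //.
    by rewrite /zz /setv (negbTE ne).
  case: (comm heA (hS i0) hse) => b1 [b2 [[B1 S1] [[B2 S2] [le1 [le2 h12]]]]].
  have Ec : E S (Gm i0) b2 := hsG i0 m hi0 b2 (BS_R B2 S2).
  pose y := setv z i0 (b2 `&` e i0).
  have hy : forall i, E S (Gm i) (y i).
    move=> i; rewrite /y /setv; case: eqP => [->|/eqP ne].
      exact: (saI (E_sa _) Ec (hE i0)).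
    rewrite hz'; apply: (saI (E_sa _)); [apply: h01B => //; exact: E_sa | exact: hE].
  have hmy : \meet_(i < n) y i = \bot.
    apply/eqP; rewrite -lex0 -h12 lexI; apply/andP; split.
      apply: le_trans le1; apply: meets_ge => j _; apply: (meets_max (j:=j)) => //.
      by rewrite /y /zz /setv; case: eqP => _; [exact: leIr | exact: lexx].
    by apply: (meets_max (j:=i0)) => //; rewrite /y /setv eqxx leIl.
  case: (IHm y hy hmy) => v [hv hvm].
  exists v; split => // i; case: (hv i) => hv1 hv2; split.
    by [].
  apply: le_trans hv2; rewrite /y /setv; case: eqP => [->|_] //.
  by rewrite hz'; apply: leI2.
Qed.

Lemma allD m : Dm m.
Proof.
case: Hfilt => hwf _.
elim/(well_founded_ind hwf): m => m IH; apply: step => M hM; exact: IH.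
Qed.

Lemma meet_lemma n Dl (G : 'I_n -> set I) (x : 'I_n -> T) : Hyps Dl G ->
  (forall i, E S (G i) (x i)) -> \meet_(i < n) x i = \bot -> Concl Dl x.
Proof. by apply: via_fin => M _; apply: allD. Qed.

End Filt.
HB.instance Definition _ := Monoid.isAddLaw.Build T Order.meet Order.join meetUl meetUr.

Definition lit (b : bool) (y : T) := if b then y else ~` y.
Definition atom n (sg : 'I_n -> bool) (x : 'I_n -> T) := \meet_(i < n) lit (sg i) (x i).
Definition hat n (sg : 'I_n -> bool) : 'I_n -> T := fun i => if sg i then \top else \bot.

Lemma compl_eq (a p q : T) : a `&` p = a `&` q -> a `&` ~` p = a `&` ~` q.
Proof.
have h : forall r, a `&` ~` r = a `&` ~` (a `&` r).
  by move=> r; rewrite complI meetUr meetxC join0x.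
by move=> e; rewrite h e -h.
Qed.

Lemma meetI_split (a p q : T) : a `&` (p `&` q) = (a `&` p) `&` (a `&` q).
Proof. by rewrite meetACA meetxx. Qed.

Lemma atomP n (P : bpoly n) (sg : 'I_n -> bool) (x : 'I_n -> T) :
  atom sg x `&` beval P x = atom sg x `&` beval P (hat sg).
Proof.
elim: P => [i| | |p ihp q ihq|p ihp q ihq|p ihp] /=.
- have hl : atom sg x <= lit (sg i) (x i) by apply: (meets_max (j:=i)).
  rewrite /hat /lit in hl *; case: (sg i) hl => hl.
    by rewrite meetx1; apply/meet_idPl.
  rewrite meetx0; apply/eqP; rewrite -lex0.
  by rewrite -(meetCx (x i)); apply: leI2.
- done.
- done.
- by rewrite meetI_split ihp ihq -meetI_split.
- by rewrite !meetUr ihp ihq.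
- exact: compl_eq.
Qed.

Lemma bool_val n (P : bpoly n) (sg : 'I_n -> bool) :
  beval P (hat sg) = \bot \/ beval P (hat sg) = \top.
Proof.
elim: P => [i| | |p ihp q ihq|p ihp q ihq|p ihp] /=.
- by rewrite /hat; case: (sg i); [right | left].
- by left.
- by right.
- case: ihp => ->; first by left; rewrite meet0x.
  by rewrite meet1x.
- case: ihp => ->; last by right; rewrite join1x.
  by rewrite join0x.
- by case: ihp => ->; [right; exact: compl0 | left; exact: compl1].
Qed.

Lemma cover n (x : 'I_n -> T) (y : T) :
  (forall sg : {ffun 'I_n -> bool}, atom sg x `&` y = \bot) -> y = \bot.
Proof.
move=> h.
have htop : \join_(sg : {ffun 'I_n -> bool}) atom sg x = \top.
  have E : \meet_(i < n) \join_(b : bool) lit b (x i) =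
     \join_(f : {ffun 'I_n -> bool}) \meet_(i < n) lit (f i) (x i).
    exact: (@bigA_distr_bigA T \bot \top _ _ 'I_n bool (fun i b => lit b (x i))).
  rewrite /atom -E.
  apply: big1 => i _; rewrite big_bool /=.
  exact: joinxC.
rewrite -[y]meetx1 -htop big_distrr /=; apply: big1 => sg _.
by rewrite meetC; apply: h.
Qed.

End Gen.

Unset Implicit Arguments.

Theorem lemma3p4 {d : Order.disp_t} (T : ctbDistrLatticeType d)
  {dI : Order.disp_t} (I : orderType dI) (B R S : I -> set T)
  (Hfilt : tightly_sigma_filtered B R S)
  (n : nat) (Delta : set I) (Gamma : 'I_n -> set I)
  (HDelta : saturated R S Delta)
  (HGamma : forall i, saturated R S (Gamma i))
  (Hint : forall i j : 'I_n, i <> j -> (fun k => Gamma i k /\ Gamma j k) = Delta)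
  (P : bpoly n) (a : 'I_n -> T)
  (Ha : forall i, E S (Gamma i) (a i))
  (HP : beval P a = Order.bottom) :
  exists rm rp : 'I_n -> T,
    (forall i, [/\ E S Delta (rm i), E S Delta (rp i),
                   (rm i <= a i)%O & (a i <= rp i)%O]) /\
    (forall eps : 'I_n -> bool,
        beval P (fun i => if eps i then rp i else rm i) = Order.bottom).
Proof.
have [Dl0 [hH hsub]] : exists Dl0 : set I, Hyps R S Dl0 Gamma /\
    (forall y, E S Dl0 y -> E S Delta y).
  case: (ltnP 1 n) => hn.
    exists Delta; split => //; split => //.
      move=> i k Dk.
      have h0 : (0 < n)%N by apply: ltn_trans hn.
      pose j0 : 'I_n := Ordinal h0.
      pose j1 : 'I_n := Ordinal hn.
      have [j ij] : exists j, i <> j.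
        case: (eqVneq i j0) => [->|ne]; last by exists j0; apply/eqP.
        by exists j1; move/(congr1 val).
      by move: Dk; rewrite -(Hint i j ij) => -[].
    by move=> i j ij k Gi Gj; rewrite -(Hint i j ij).
  exists (fun _ => False); split; last by move=> y; apply: E_mono.
  split => //.
  move=> i j ij; exfalso; apply: ij; apply: val_inj.
  have h0 : forall k : 'I_n, val k = 0%N.
    by move=> k; move: (leq_trans (ltn_ord k) hn); rewrite ltnS leqn0 => /eqP.
  by rewrite !h0.
have hU : forall sg : {ffun 'I_n -> bool}, exists u : 'I_n -> T,
    (forall i, E S Delta (u i) /\ lit (sg i) (a i) <= u i) /\
    (beval P (hat T sg) = \top -> \meet_(i < n) u i = \bot).
  move=> sg; case: (pselect (beval P (hat T sg) = \top)) => hP; last first.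
    exists (fun _ => \top); split => // i; split; [exact: (sa1 (E_sa _ _)) | exact: lex1].
  have hat0 : atom sg a = \bot.
    by have := atomP P sg a; rewrite HP hP meetx0 meetx1.
  have hx : forall i, E S (Gamma i) (lit (sg i) (a i)).
    by move=> i; rewrite /lit; case: (sg i); [exact: Ha | exact: (saC (E_sa _ _) (Ha i))].
  have [u [hu hum]] := meet_lemma Hfilt hH hx hat0.
  exists u; split => // i; case: (hu i) => h1 h2; split => //; exact: hsub.
case/choice: hU => U hU.
pose rp i := \meet_(sg : {ffun 'I_n -> bool} | sg i) U sg i.
pose rm i := \join_(sg : {ffun 'I_n -> bool} | ~~ sg i) ~` (U sg i).
have hrp : forall i, a i <= rp i.
  move=> i; apply: meets_ge => sg hsg; case: (hU sg) => /(_ i) [_].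
  by rewrite /lit hsg.
have hrm : forall i, rm i <= a i.
  move=> i; apply: joins_le => sg hsg; case: (hU sg) => /(_ i) [_].
  by rewrite /lit (negbTE hsg) leCx.
exists rm, rp; split.
  move=> i; split => //.
  - apply: sa_joins; first exact: E_sa.
    by move=> sg _; apply: (saC (E_sa _ _)); case: (hU sg) => /(_ i) [].
  - apply: sa_meets; first exact: E_sa.
    by move=> sg _; case: (hU sg) => /(_ i) [].
move=> eps; apply: (cover (x := fun i => if eps i then rp i else rm i)) => sg.
rewrite atomP; case: (bool_val T P sg) => hb; rewrite hb; first by rewrite meetx0.
rewrite meetx1; case: (hU sg) => hu /(_ hb) hum.
apply/eqP; rewrite -lex0 -hum; apply: meet_mono => i.
rewrite /lit; case hs: (sg i).
  apply: (@le_trans _ _ (rp i)); last by apply: (meets_max (j := sg)) => //.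
  by case: (eps i) => //; apply: le_trans (hrp i).
rewrite leCx; apply: (@le_trans _ _ (rm i)).
  by apply: (joins_min (j := sg)); rewrite ?hs.
by case: (eps i) => //; apply: le_trans (hrp i).
Qed.
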